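(* Let $n\geqslant 3$, let $S$ be a caterpillar species tree with $n$ leaves and let $G$ be a caterpillar gene tree on the same label set that differs from $S$ by a nearest-neighbor-interchange (NNI) move. Then (i) the roadblock set $B_{G,S}$ consists of a single point $(i,i)$ for some $i$ with $1\leqslant i\leqslant n-2$; and (ii) the number of coalescent histories for $(G,S)$ is $C_{n-1}-C_iC_{n-1-i}$, where $C_m=\frac{1}{m+1}\binom{2m}{m}$.
   Context: All trees are binary, rooted, leaf-labeled. A caterpillar tree with $n$ leaves is one in which some internal node is descended from all other internal nodes. Its canonical label vector $(x_1,\dots,x_n)$ has $x_1,x_2$ the labels of the two leaves of the cherry (unique internal node with two descendant leaves) and, for $3\leqslant i\leqslant n$, $x_i$ the label of the leaf separated from the root by $n-i+1$ edges; vectors differing only by swapping $x_1,x_2$ describe the same tree. $G$ and $S$ differ by an NNI move if the canonical vector of $S$ is obtained from that of $G$ by exchanging the labels in positions $\{k,k+1\}$ for some $2\leqslant k\leqslant n-1$, or in positions $\{1,3\}$. Internal nodes are numbered $1,\dots,n-1$ from cherry to root; internal edge $i$ is the edge above node $i$, with an extra edge $n-1$ above the root. A coalescent history for $(G,S)$ is a map $h$ from internal nodes of $G$ to internal edges of $S$ such that (1) every label of a leaf below node $v$ of $G$ labels a leaf of $S$ below edge $h(v)$, and (2) if $v_2$ is descended from $v_1$ in $G$ then $h(v_2)$ is descended from $h(v_1)$ (objects are descended from themselves). With $\mathbf g,\mathbf s$ the canonical vectors of $G,S$, $\sigma(x)$ the index of $x$ in $\mathbf s$ and $F(j)=\max\{\sigma(g_1),\dots,\sigma(g_{j+1})\}-1$,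 the roadblock set is $B_{G,S}=\{(i,j)\in\mathbb Z^2:1\leqslant j\leqslant i\leqslant n-1,\ i<F(j)\}$. *)

(* Defs.v *)
From mathcomp Require Import all_boot all_order all_algebra.
Set Implicit Arguments. Unset Strict Implicit. Unset Printing Implicit Defensive.
Import GRing.Theory Num.Theory.

(* A caterpillar tree with n leaves is represented by (a representative of)
   its canonical label vector x = (x_1,...,x_n), a duplicate-free seq of
   natural-number labels of size n.  Positions are 1-indexed via [lab]. *)

Definition lab (x : seq nat) (i : nat) : nat := nth 0 x i.-1.

Definition tr (a b i : nat) : nat := if i == a then b else if i == b then a else i.
Definition swap_pos (a b : nat) (x : seq nat) : seq nat :=
  mkseq (fun i => lab x (tr a b i.+1)) (size x).

Definition nni (n : nat) (g s : seq nat) : Prop :=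
  (exists k, 2 <= k <= n.-1 /\ s = swap_pos k k.+1 g) \/ s = swap_pos 1 3 g.

(* Internal node k (1 <= k <= n-1) of a caterpillar with vector x has below
   it exactly the leaves labelled x_1, ..., x_{k+1}; internal edge k (the edge
   above node k, edge n-1 being the extra edge above the root) has the same
   leaves below it. *)
Definition clade (x : seq nat) (k : nat) : seq nat := take k.+1 x.

(* In a caterpillar, node k is the parent of node k-1, so node a is
   descended from node b (objects are descended from themselves) iff a <= b;
   likewise for internal edges. *)
Definition desc_node (a b : nat) : bool := a <= b.
Definition desc_edge (a b : nat) : bool := a <= b.

(* Coalescent histories: maps from internal nodes 1..n-1 of G to internal
   edges 1..n-1 of S; an ordinal v : 'I_(n-1) stands for node/edge v+1. *)
Definition is_history (n : nat) (g s : seq nat) (h : {ffun 'I_n.-1 -> 'I_n.-1}) : bool :=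
  [forall v : 'I_n.-1,
      all (fun x => x \in clade s (h v).+1) (clade g v.+1)] &&
  [forall v1 : 'I_n.-1, forall v2 : 'I_n.-1,
      desc_node v2.+1 v1.+1 ==> desc_edge (h v2).+1 (h v1).+1].

Definition num_histories (n : nat) (g s : seq nat) : nat :=
  #|[set h : {ffun 'I_n.-1 -> 'I_n.-1} | @is_history n g s h]|.

Definition sigma (s : seq nat) (x : nat) : nat := (index x s).+1.
Definition Ffun (g s : seq nat) (j : nat) : nat :=
  (\max_(x <- take j.+1 g) sigma s x) - 1.

Definition roadblock (n : nat) (g s : seq nat) (p : nat * nat) : bool :=
  [&& 1 <= p.2, p.2 <= p.1, p.1 <= n.-1 & p.1 < Ffun g s p.2].

Definition catalan (m : nat) : rat := ('C(2 * m, m))%:R / (m.+1)%:R.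

(* Main.v *)
Require Import Defs.
From mathcomp Require Import all_boot all_order all_algebra zify.
Set Implicit Arguments. Unset Strict Implicit. Unset Printing Implicit Defensive.


Definition monoP L M (lb : nat -> nat) (b : nat) (h : {ffun 'I_L -> 'I_M}) : bool :=
  [forall i : 'I_L, (lb i <= h i) && (h i <= b)] &&
  [forall i : 'I_L, forall j : 'I_L, (i <= j) ==> (h i <= h j)].

Definition Wc L M lb b := #|[set h : {ffun 'I_L -> 'I_M} | monoP lb b h]|.

Lemma Wc0 M lb b : Wc 0 M lb b = 1.
Proof.
rewrite /Wc (_ : [set h | _] = setT); last first.
  apply/setP => h; rewrite !inE /monoP.
  by apply/andP; split; apply/forallP => -[].
by rewrite cardsT card_ffun !card_ord.
Qed.

Definition ext L M (a : 'I_M) (f : {ffun 'I_L -> 'I_M}) : {ffun 'I_L.+1 -> 'I_M} :=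
  [ffun i => if unlift ord_max i is Some j then f j else a].
Definition rest L M (h : {ffun 'I_L.+1 -> 'I_M}) : {ffun 'I_L -> 'I_M} :=
  [ffun j => h (lift ord_max j)].

Lemma ext_lift L M a (f : {ffun 'I_L -> 'I_M}) j : ext a f (lift ord_max j) = f j.
Proof. by rewrite ffunE liftK. Qed.
Lemma ext_max L M a (f : {ffun 'I_L -> 'I_M}) : ext a f ord_max = a.
Proof. by rewrite ffunE unlift_none. Qed.
Lemma ext_rest L M (h : {ffun 'I_L.+1 -> 'I_M}) : h = ext (h ord_max) (rest h).
Proof.
apply/ffunP => i; rewrite ffunE; case: (unliftP ord_max i) => [j ->|->] //.
by rewrite ffunE.
Qed.
Lemma val_lift_max L (j : 'I_L) : nat_of_ord (lift ord_max j) = j.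
Proof. exact: lift_max. Qed.

Lemma monoP_ext L M lb b a (f : {ffun 'I_L -> 'I_M}) :
  monoP lb b (ext a f) = [&& monoP lb a f, lb L <= a & a <= b].
Proof.
apply/idP/idP.
- case/andP => /forallP H1 /forallP H2.
  have HM := H1 ord_max; rewrite ext_max /= in HM.
  case/andP: HM => HM1 HM2; rewrite HM1 HM2 !andbT /monoP.
  apply/andP; split; apply/forallP => i.
    have := H1 (lift ord_max i); rewrite ext_lift val_lift_max => /andP[-> _] /=.
    have := H2 (lift ord_max i) => /forallP /(_ ord_max).
    rewrite ext_lift ext_max val_lift_max /= => /implyP; apply; exact: ltnW (ltn_ord i).
  apply/forallP => j; apply/implyP => Hij.
  have := H2 (lift ord_max i) => /forallP /(_ (lift ord_max j)).
  by rewrite !ext_lift !val_lift_max Hij.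
- case/and3P => /andP[/forallP H1 /forallP H2] Hl Hb.
  apply/andP; split; apply/forallP => i.
    case: (unliftP ord_max i) => [j ->|->]; last by rewrite ext_max Hl Hb.
    rewrite ext_lift val_lift_max.
    case/andP: (H1 j) => -> /= Hj.
    exact: leq_trans Hj Hb.
  apply/forallP => i'; apply/implyP.
  case: (unliftP ord_max i) => [j ->|->]; case: (unliftP ord_max i') => [j' ->|->];
    rewrite ?ext_lift ?ext_max ?val_lift_max //=.
  - by move=> Hjj; move: (H2 j) => /forallP /(_ j') /implyP; apply.
  - by move=> _; case/andP: (H1 j).
  - by move=> H; move: (ltn_ord j'); rewrite ltnNge H.
Qed.

Lemma ext_inj L M (a : 'I_M) : injective (@ext L M a).
Proof.
move=> f1 f2 E; apply/ffunP => j.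
by rewrite -(ext_lift a f1) -(ext_lift a f2) E.
Qed.

Lemma fiber_card L M lb b (a : 'I_M) :
  #|[pred h : {ffun 'I_L.+1 -> 'I_M} | monoP lb b h && (h ord_max == a)]| =
  if (lb L <= a) && (a <= b) then Wc L M lb a else 0.
Proof.
case: ifP => Hc.
- rewrite /Wc -(card_imset _ (@ext_inj L M a)).
  apply: eq_card => h; rewrite inE.
  apply/idP/imsetP.
  + case/andP => Hm /eqP Ha.
    exists (rest h); last by rewrite {1}(ext_rest h) Ha.
    by move: Hm; rewrite {1}(ext_rest h) Ha monoP_ext inE => /andP[].
  + case=> f; rewrite inE => Hf ->.
    by rewrite monoP_ext ext_max eqxx Hf Hc.
- apply: eq_card0 => h; rewrite inE.
  apply/negP => /andP[Hm /eqP Ha].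
  move: Hm; rewrite (ext_rest h) monoP_ext Ha.
  by rewrite Hc andbF.
Qed.

Lemma WcS L M lb b :
  Wc L.+1 M lb b = \sum_(a < M | (lb L <= a) && (a <= b)) Wc L M lb a.
Proof.
rewrite /Wc -sum1_card (partition_big (fun h : {ffun 'I_L.+1 -> 'I_M} => h ord_max) predT) //=.
rewrite [RHS]big_mkcond /=; apply: eq_bigr => a _.
rewrite -(@fiber_card L M lb b a) -sum1_card; apply: eq_bigl => h.
by rewrite !inE.
Qed.

Fixpoint wf (lb : nat -> nat) (L b : nat) : nat :=
  match L with
  | 0 => 1
  | L'.+1 => \sum_(lb L' <= a < b.+1) wf lb L' a
  end.

Lemma Wc_wf L M lb b : b < M -> Wc L M lb b = wf lb L b.
Proof.
elim: L b => [|L IH] b Hb; first by rewrite Wc0.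
rewrite WcS /= big_geq_mkord (big_ord_widen_cond M) //.
rewrite [RHS]big_mkcond [LHS]big_mkcond; apply: eq_bigr => a _.
rewrite ltnS andbC; case: ifP => // /andP[Hab _].
by apply: IH; apply: leq_ltn_trans Hb.
Qed.


Lemma wf_ext lb1 lb2 L b : (forall v, v < L -> lb1 v = lb2 v) -> wf lb1 L b = wf lb2 L b.
Proof.
elim: L b => [|L IH] b H //=.
rewrite H //; apply: eq_bigr => a _; apply: IH => v Hv; apply: H; exact: ltnW.
Qed.

Definition wid := wf (fun v => v).

Lemma wid_vanish L b : b < L -> wid L.+1 b = 0.
Proof. by move=> H; rewrite /wid /= big_geq. Qed.

Lemma widS L b : L <= b.+1 -> wid L.+1 b.+1 = wid L.+1 b + wid L b.+1.
Proof. by move=> H; rewrite /wid /= big_nat_recr. Qed.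

Lemma wid1 b : wid 1 b = b.+1.
Proof. by rewrite /wid /= sum_nat_const_nat subn0 muln1. Qed.

Lemma widQc L c : wid L.+1 (L + c) + 'C(L + (L + c) + 2, L) = 'C(L + (L + c) + 2, L.+1).
Proof.
elim: L c => [|L IH] c.
  by rewrite wid1 bin0 bin1; lia.
elim: c => [|c IHc].
- rewrite addn0 widS; last by lia.
  rewrite wid_vanish // add0n.
  have := IH 1.
  have -> : L + (L + 1) + 2 = L + L + 3 by lia.
  have -> : L.+1 + L.+1 + 2 = (L + L + 3).+1 by lia.
  rewrite (binS _ L) (binS _ L.+1).
  have Hs : 'C(L + L + 3, L.+2) = 'C(L + L + 3, L.+1).
    rewrite -bin_sub; last by lia.
    congr 'C(_, _); lia.
  rewrite Hs addn1; lia.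
- have -> : L.+1 + c.+1 = (L.+1 + c).+1 by lia.
  rewrite widS; last by lia.
  have := IH c.+2.
  move: IHc.
  have -> : L.+1 + (L.+1 + c).+1 + 2 = (L + L + c + 4).+1 by lia.
  have -> : L.+1 + (L.+1 + c) + 2 = (L + L + c + 4) by lia.
  have -> : L + (L + c.+2) + 2 = (L + L + c + 4) by lia.
  have -> : L + c.+2 = (L.+1 + c).+1 by lia.
  rewrite (binS _ L) (binS _ L.+1); lia.
Qed.

Lemma widQ L b : L <= b -> wid L.+1 b + 'C(L + b + 2, L) = 'C(L + b + 2, L.+1).
Proof. by move=> H; have := widQc L (b - L); rewrite subnKC. Qed.

Lemma wid_cat L : ((wid L.+1 L)%:R = ('C(2 * L.+1, L.+1))%:R / (L.+2)%:R :> rat)%R.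
Proof.
have H := widQ (leqnn L).
have H2 := mul_bin_left (L + L + 2) L.
have E0 : L + L + 2 - L = L.+2 by lia.
rewrite E0 in H2.
have -> : 2 * L.+1 = L + L + 2 by lia.
have E : wid L.+1 L * L.+2 = 'C(L + L + 2, L.+1) by nia.
by rewrite -E GRing.natrM GRing.mulfK // Num.Theory.pnatr_eq0.
Qed.

Lemma wid_diag L : wid L L = wid L.+1 L.
Proof. by rewrite /wid /= big_nat1. Qed.

Lemma sum_shift (F : nat -> nat) l b d :
  \sum_(l + d <= a < b + d) F a = \sum_(l <= a < b) F (a + d).
Proof. by rewrite big_addn addnK. Qed.

Definition lbr i0 := fun v => if v == i0 then v.+1 else v.

Lemma decomp i0 l b :
  wf (lbr i0) (l + i0.+1) (b + i0.+1) + wid i0 i0 * wid l b = wid (l + i0.+1) (b + i0.+1).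
Proof.
elim: l b => [|l IH] b.
- rewrite /= muln1 /lbr eqxx /wid /=.
  rewrite (@big_ltn _ _ _ i0); last by lia.
  rewrite addnC; congr (_ + _); apply: eq_bigr => a _.
  apply: wf_ext => v Hv; rewrite /lbr; case: eqP => //; lia.
- rewrite addSn /=.
  have -> : lbr i0 (l + i0.+1) = l + i0.+1 by rewrite /lbr; case: eqP => //; lia.
  rewrite -addSn sum_shift [wid l.+1 b]/wid /= big_distrr /= -big_split /=.
  rewrite /wid /= -addSn sum_shift; apply: eq_bigr => a _.
  exact: IH.
Qed.


Section Gen.
Variables (n : nat) (g s : seq nat) (t : nat -> nat).
Hypothesis Hg : uniq g.
Hypothesis Hsz : size g = n.
Hypothesis Hus : uniq s.
Hypothesis Hs : s = mkseq (fun j => nth 0 g (t j)) n.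
Hypothesis Ht : forall j, j < n -> t j < n.
Hypothesis Htt : forall j, j < n -> t (t j) = j.

Lemma size_s : size s = n.
Proof. by rewrite Hs size_mkseq. Qed.

Lemma nth_g_s j0 : j0 < n -> nth 0 g j0 = nth 0 s (t j0).
Proof. by move=> H; rewrite Hs nth_mkseq ?Htt ?Ht. Qed.

Lemma idx j0 : j0 < n -> index (nth 0 g j0) s = t j0.
Proof. by move=> H; rewrite nth_g_s // index_uniq // size_s Ht. Qed.

Lemma memtake K j0 : j0 < n -> (nth 0 g j0 \in take K s) = (t j0 < K).
Proof.
move=> H; rewrite in_take ?idx //.
by rewrite nth_g_s // mem_nth // size_s Ht.
Qed.

Lemma mem_take_nth x N : N <= n -> x \in take N g -> exists j0, j0 < N /\ x = nth 0 g j0.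
Proof.
move=> HN /(nthP 0) [j Hj <-]; rewrite size_takel ?Hsz // in Hj.
by exists j; rewrite nth_take.
Qed.

Lemma nth_in_take j0 N : N <= n -> j0 < N -> nth 0 g j0 \in take N g.
Proof.
move=> HN Hj; rewrite -(nth_take 0 Hj) mem_nth // size_takel // Hsz //.
Qed.

Lemma alltake N K : N <= n ->
  all (fun x => x \in take K s) (take N g) <-> (forall j0, j0 < N -> t j0 < K).
Proof.
move=> HN; split.
- move/allP => H j0 Hj; have := H _ (nth_in_take HN Hj).
  by rewrite memtake //; apply: leq_trans HN.
- move=> H; apply/allP => x /(mem_take_nth HN) [j0 [Hj ->]].
  rewrite memtake; first exact: H.
  exact: leq_trans HN.
Qed.

Lemma Fltn p1 p2 : p2 < n ->
  (p1 < Ffun g s p2) <-> (exists j0, j0 <= p2 /\ p1 < t j0).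
Proof.
move=> Hp; rewrite /Ffun; split.
- case: (boolP [exists j : 'I_p2.+1, p1 < t j]) => [/existsP [j Hj] _|/existsPn H].
    by exists j; split => //; rewrite -ltnS.
  have : \max_(x <- take p2.+1 g) sigma s x <= p1.+1.
    apply/bigmax_leqP_seq => x /(mem_take_nth Hp) [j0 [Hj ->]] _.
    rewrite /sigma idx; last by apply: leq_trans Hp.
    by have := H (Ordinal Hj); rewrite /= -leqNgt.
  lia.
- case=> j0 [Hj Hl].
  have : sigma s (nth 0 g j0) <= \max_(x <- take p2.+1 g) sigma s x.
    apply: leq_bigmax_seq => //; apply: nth_in_take => //.
  rewrite /sigma idx; last by lia.
  lia.
Qed.

End Gen.


Lemma assemble n g s t i0 :
  uniq g -> size g = n -> uniq s -> s = mkseq (fun j => nth 0 g (t j)) n ->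
  (forall j, j < n -> t j < n) -> (forall j, j < n -> t (t j) = j) ->
  i0.+3 <= n ->
  (forall v k, v < n.-1 -> k < n.-1 -> ((forall j0, j0 < v.+2 -> t j0 < k.+2) <-> lbr i0 v <= k)) ->
  (forall p1 p2, 1 <= p2 -> p2 <= p1 -> p1 <= n.-1 ->
      ((exists j0, j0 <= p2 /\ p1 < t j0) <-> (p1 = i0.+1 /\ p2 = i0.+1))) ->
  exists i : nat,
    [/\ (1 <= i <= n - 2)%N,
        (forall p : nat * nat, roadblock n g s p <-> p = (i, i)) &
        ((num_histories n g s)%:R = catalan n.-1 - catalan i * catalan (n.-1 - i)%N :> rat)%R].
Proof.
move=> Hg Hsz Hus Hs Ht Htt Hn Hcl Hrb.
exists i0.+1; split.
- apply/andP; split => //; lia.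
- case=> p1 p2; rewrite /roadblock /=; split.
  + case/and4P => H1 H2 H3 H4.
    have [E1 E2] : p1 = i0.+1 /\ p2 = i0.+1.
      apply/(Hrb _ _ H1 H2 H3).
      apply/(Fltn Hg Hsz Hus Hs Ht Htt) => //; lia.
    by rewrite E1 E2.
  + case=> -> ->; apply/and4P; split => //; first lia.
    apply/(Fltn Hg Hsz Hus Hs Ht Htt); first lia.
    by apply/(Hrb _ _) => //; lia.
- have Hnum : num_histories n g s = Wc n.-1 n.-1 (lbr i0) n.-2.
    rewrite /num_histories /Wc; apply: eq_card => h; rewrite !inE /is_history /monoP.
    congr andb.
    + apply: eq_forallb => v.
      have -> : h v <= n.-2 by have := ltn_ord (h v); lia.
      rewrite andbT /clade.
      have HN : v.+2 <= n by have := ltn_ord v; lia.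
      apply/idP/idP => H.
      * apply/(Hcl v (h v) (ltn_ord v) (ltn_ord _)).
        exact/(alltake Hsz Hus Hs Ht Htt _ HN).
      * apply/(alltake Hsz Hus Hs Ht Htt _ HN).
        exact/(Hcl v (h v) (ltn_ord v) (ltn_ord _)).
    + rewrite /desc_node /desc_edge.
      apply/idP/idP => /forallP H; apply/forallP => x; apply/forallP => y.
      * have := H y => /forallP /(_ x); by rewrite !ltnS.
      * have := H y => /forallP /(_ x); by rewrite !ltnS.
  rewrite Hnum Wc_wf; last by lia.
  have [m Em] : exists m, n = m.+2 by exists n.-2; lia.
  rewrite Em /= in Hn *.
  set l := m.+1 - i0.+1.
  have [l' El] : exists l', l = l'.+1 by exists l.-1; rewrite /l; lia.
  have E1 : m.+1 = l'.+1 + i0.+1 by rewrite -El /l; lia.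
  have E2 : m = l' + i0.+1 by rewrite -El /l in E1; lia.
  have D := decomp i0 l'.+1 l'.
  rewrite -E2 -E1 in D.
  rewrite El /catalan -!wid_cat -(wid_diag i0).
  change ((wf (lbr i0) m.+1 m)%:R = (wid m.+1 m)%:R - (wid i0 i0)%:R * (wid l'.+1 l')%:R :> rat)%R.
  by rewrite -D GRing.natrD GRing.natrM GRing.addrK.
Qed.

Ltac noif t := lazymatch t with context[if _ then _ else _] => fail | _ => idtac end.
Ltac dif := repeat match goal with |- context [?x == ?y] => noif x; noif y; case: (x =P y) => ? end.


Import GRing.Theory Num.Theory.
Local Open Scope ring_scope.

Theorem proposition5 (n : nat) (g s : seq nat) :
  (3 <= n)%N -> uniq g -> size g = n -> perm_eq s g -> nni n g s ->
  exists i : nat,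
    [/\ (1 <= i <= n - 2)%N,
        (forall p : nat * nat, roadblock n g s p <-> p = (i, i)) &
        (num_histories n g s)%:R = catalan n.-1 - catalan i * catalan (n.-1 - i)%N :> rat].

Proof.
move=> Hn Hg Hsz Hperm Hnni.
have Hus : uniq s by rewrite (perm_uniq Hperm).
case: Hnni => [[k [/andP [Hk1 Hk2] Es]] | Es]; rewrite Es in Hus *.
- apply: (@assemble n g _ (fun j => (tr k k.+1 j.+1).-1) k.-2) => //.
  + by rewrite /swap_pos /lab Hsz.
  + move=> j Hj; rewrite /tr; dif; lia.
  + move=> j Hj; rewrite /tr; dif; lia.
  + lia.
  + move=> v kk Hv Hkk; split.
    * move=> H; have H1 := H v (ltnW (ltnSn _)); have H2 := H v.+1 (ltnSn _).
      move: H1 H2; rewrite /lbr /tr; dif; lia.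
    * move=> H j0 Hj0; move: H Hj0; rewrite /lbr /tr; dif; lia.
  + move=> p1 p2 H1 H2 H3; split.
    * case=> j0 [Hj0 Hl]; move: Hl; rewrite /tr; dif; lia.
    * case=> -> ->; exists k.-1; split; first lia.
      rewrite /tr; dif; lia.
- apply: (@assemble n g _ (fun j => (tr 1 3 j.+1).-1) 0) => //.
  + by rewrite /swap_pos /lab Hsz.
  + move=> j Hj; rewrite /tr; dif; lia.
  + move=> j Hj; rewrite /tr; dif; lia.
  + move=> v kk Hv Hkk; split.
    * move=> H; have H0 := H 0 (ltn0Sn _).
      have H1 := H v (ltnW (ltnSn _)); have H2 := H v.+1 (ltnSn _).
      move: H0 H1 H2; rewrite /lbr /tr; dif; lia.
    * move=> H j0 Hj0; move: H Hj0; rewrite /lbr /tr; dif; lia.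
  + move=> p1 p2 H1 H2 H3; split.
    * case=> j0 [Hj0 Hl]; move: Hl; rewrite /tr; dif; lia.
    * case=> -> ->; exists 0; split; first lia.
      rewrite /tr; dif; lia.
Qed.
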